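(* Let $p$ be a prime, $\lambda=(\lambda_1,\dots,\lambda_l)$ a non-increasing sequence of positive integers and $\alpha\in M_l(\mathbf Z)$. Then the Pontryagin dual of the extension $\xi(\alpha)$, namely $0\to\widehat{\mathbf T[p^\lambda]}\xrightarrow{\hat q}\widehat{L(\alpha)}\xrightarrow{\hat f}\widehat{\mathbf Z/p^\lambda}\to0$, regarded (via the pairing below) as an extension over $\mathbf T[p^\lambda]$ with kernel $\mathbf Z/p^\lambda$, is equivalent to the extension $\xi(\alpha^{T})$ associated to the transpose matrix.
   Context: $\mathbf T=\mathbf R/\mathbf Z$. Let $p^\lambda:\mathbf Z^l\to\mathbf Z^l$, $(x_i)\mapsto(p^{\lambda_i}x_i)$; $\mathbf Z/p^\lambda:=\mathbf Z^l/p^\lambda\mathbf Z^l$; $\mathbf T[p^\lambda]=\{\mu\in\mathbf T^l:p^{\lambda_i}\mu_i=0\ \forall i\}$. These finite groups are mutually Pontryagin dual via $(\mu,x)\mapsto\mu_1x_1+\dots+\mu_lx_l$. Let $a_\alpha:\mathbf Z^l\to\mathbf Z/p^\lambda$ send the $i$-th standard basis vector to the class of $(\alpha_{i1},\dots,\alpha_{il})$. The extension $\xi(\alpha):0\to\mathbf Z/p^\lambda\xrightarrow{f}L(\alpha)\xrightarrow{q}\mathbf T[p^\lambda]\to0$ is defined by $L(\alpha)=(\mathbf Z/p^\lambda\oplus\mathbf Z^l)/\{(a_\alpha(x),-p^\lambda x):x\in\mathbf Z^l\}$, $f(c)=[(c,0)]$, $q([(c,y)])=(y_1/p^{\lambda_1},\dots,y_l/p^{\lambda_l})\bmod\mathbf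 Z^l$. Two extensions $0\to K\to X\to Q\to0$ and $0\to K\to X'\to Q\to0$ are equivalent if there is an isomorphism $X\to X'$ compatible with the identity maps on $K$ and $Q$. *)

(* Defs.v *)
From HB Require Import structures.
From mathcomp Require Import all_boot all_algebra generic_quotient.
From mathcomp Require Import boolp reals.
Set Implicit Arguments. Unset Strict Implicit. Unset Printing Implicit Defensive.
Import GRing.Theory Num.Theory.
Local Open Scope ring_scope.
Local Open Scope quotient_scope.

Record subgrp (V : zmodType) := SubGrp {
  sg_mem :> V -> Prop;
  sg_0 : sg_mem 0;
  sg_B : forall x y, sg_mem x -> sg_mem y -> sg_mem (x - y) }.

Section QuotZmod.
Variables (V : zmodType) (S : subgrp V).

Definition qrel : rel V := fun x y => `[< S (x - y) >].

Lemma sg_N x : S x -> S (- x).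
Proof. by move=> Sx; rewrite -sub0r; apply: sg_B => //; apply: sg_0. Qed.

Lemma qrel_refl : reflexive qrel.
Proof. by move=> x; apply/asboolP; rewrite subrr; apply: sg_0. Qed.
Lemma qrel_sym : symmetric qrel.
Proof.
move=> x y; apply/asboolP/asboolP => /sg_N; by rewrite opprB.
Qed.
Lemma qrel_trans : transitive qrel.
Proof.
move=> y x z /asboolP Sxy /asboolP Syz; apply/asboolP.
have -> : x - z = (x - y) - (z - y) by rewrite opprB addrA subrK.
by apply: sg_B => //; rewrite -opprB; apply: sg_N.
Qed.

Definition qequiv := EquivRel qrel qrel_refl qrel_sym qrel_trans.
Definition quotZ := {eq_quot qequiv}.
HB.instance Definition _ := EqQuotient.on quotZ.
HB.instance Definition _ := Choice.on quotZ.

Lemma qrelD x x' y y' : qrel x x' -> qrel y y' -> qrel (x + y) (x' + y').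
Proof.
move=> /asboolP Sx /asboolP Sy; apply/asboolP.
have -> : (x + y) - (x' + y') = (x - x') - (y' - y).
  by rewrite opprD opprB addrACA addrC.
by apply: sg_B => //; rewrite -opprB; apply: sg_N.
Qed.

Lemma qrelN x x' : qrel x x' -> qrel (- x) (- x').
Proof. by move=> /asboolP Sx; apply/asboolP; rewrite -opprD; apply: sg_N. Qed.

Lemma repr_pi x : qrel (repr (\pi_quotZ x)) x.
Proof. by apply/(@eqmodP _ qequiv); rewrite reprK. Qed.

Definition qzero : quotZ := \pi_quotZ 0.
Definition qadd (a b : quotZ) : quotZ := \pi_quotZ (repr a + repr b).
Definition qopp (a : quotZ) : quotZ := \pi_quotZ (- repr a).

Lemma qaddE x y : qadd (\pi_quotZ x) (\pi_quotZ y) = \pi_quotZ (x + y).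
Proof. by apply/(@eqmodP _ qequiv); apply: qrelD; apply: repr_pi. Qed.
Lemma qoppE x : qopp (\pi_quotZ x) = \pi_quotZ (- x).
Proof. by apply/(@eqmodP _ qequiv); apply: qrelN; apply: repr_pi. Qed.

Lemma qaddA : associative qadd.
Proof.
move=> a b c; rewrite -[a](@reprK _ quotZ) -[b](@reprK _ quotZ) -[c](@reprK _ quotZ).
by rewrite !qaddE addrA.
Qed.
Lemma qaddC : commutative qadd.
Proof. by move=> a b; rewrite -[a](@reprK _ quotZ) -[b](@reprK _ quotZ) !qaddE addrC. Qed.
Lemma qadd0 : left_id qzero qadd.
Proof. by move=> a; rewrite -[a](@reprK _ quotZ) /qzero qaddE add0r. Qed.
Lemma qaddN : left_inverse qzero qopp qadd.
Proof. by move=> a; rewrite -[a](@reprK _ quotZ) qoppE qaddE addNr. Qed.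

HB.instance Definition _ := GRing.isZmodule.Build quotZ qaddA qaddC qadd0 qaddN.

Lemma piD x y : \pi_quotZ (x + y) = (\pi_quotZ x + \pi_quotZ y :> quotZ).
Proof. by rewrite -qaddE. Qed.
Lemma piN x : \pi_quotZ (- x) = (- \pi_quotZ x :> quotZ).
Proof. by rewrite -qoppE. Qed.
End QuotZmod.

Section Circle.
Variable R : realType.

Definition intZ_pred (x : R) : Prop := exists n : int, x = n%:~R.
Lemma intZ0 : intZ_pred 0. Proof. by exists 0; rewrite mulr0z. Qed.
Lemma intZB x y : intZ_pred x -> intZ_pred y -> intZ_pred (x - y).
Proof. by move=> [n ->] [m ->]; exists (n - m); rewrite intrB. Qed.
Definition intZ : subgrp R := SubGrp intZ0 intZB.

Definition circle : zmodType := quotZ intZ.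
End Circle.

Section Ext.
Variables (p l : nat) (lam : 'I_l -> nat).

Definition plam (x : 'rV[int]_l) : 'rV[int]_l :=
  \row_i ((p ^ lam i)%:Z * x 0 i).

Lemma plam0 : plam 0 = 0.
Proof. by apply/rowP => i; rewrite !mxE mulr0. Qed.
Lemma plamB x y : plam (x - y) = plam x - plam y.
Proof. by apply/rowP => i; rewrite !mxE mulrBr. Qed.

Definition plamZ_pred (c : 'rV[int]_l) : Prop := exists u, c = plam u.
Lemma plamZ0 : plamZ_pred 0. Proof. by exists 0; rewrite plam0. Qed.
Lemma plamZB x y : plamZ_pred x -> plamZ_pred y -> plamZ_pred (x - y).
Proof. by move=> [u ->] [v ->]; exists (u - v); rewrite plamB. Qed.
Definition plamZ : subgrp 'rV[int]_l := SubGrp plamZ0 plamZB.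

Definition Zplam : zmodType := quotZ plamZ.
Definition toZplam (c : 'rV[int]_l) : Zplam := \pi_Zplam c.

Definition a_ (alpha : 'M[int]_l) (x : 'rV[int]_l) : Zplam := toZplam (x *m alpha).

Lemma a_B alpha x y : a_ alpha (x - y) = a_ alpha x - a_ alpha y.
Proof. by rewrite /a_ /toZplam mulmxBl piD piN. Qed.

Definition Lrel_pred (alpha : 'M[int]_l) (v : Zplam * 'rV[int]_l) : Prop :=
  exists x : 'rV[int]_l, v = (a_ alpha x, - plam x).
Lemma Lrel0 alpha : Lrel_pred alpha 0.
Proof.
exists 0; rewrite plam0 oppr0 /a_ mul0mx /toZplam; congr (_, _).
Qed.
Lemma LrelB alpha v w : Lrel_pred alpha v -> Lrel_pred alpha w ->
  Lrel_pred alpha (v - w).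
Proof.
move=> [x ->] [y ->]; exists (x - y).
rewrite a_B plamB; apply: injective_projections => //=.
by rewrite opprB opprK addrC.
Qed.
Definition Lrel alpha : subgrp (Zplam * 'rV[int]_l)%type :=
  SubGrp (Lrel0 alpha) (@LrelB alpha).

(* L(alpha) := (Z/p^lambda (+) Z^l) / {(a_alpha(x), -p^lambda x)} *)
Definition L (alpha : 'M[int]_l) : zmodType := quotZ (Lrel alpha).

Definition fL alpha (c : Zplam) : L alpha := \pi_(L alpha) (c, 0).

Variable R : realType.

Definition Tplam : {pred 'rV[circle R]_l} :=
  fun mu => [forall i, (mu 0 i) *+ (p ^ lam i) == 0].

Definition qL alpha (v : L alpha) : 'rV[circle R]_l :=
  \row_i \pi_(circle R) (((repr v).2 0 i)%:~R / (p ^ lam i)%:R : R).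

Definition pairing (mu : 'rV[circle R]_l) (x : Zplam) : circle R :=
  \sum_i (mu 0 i) *~ ((repr x) 0 i).

End Ext.

Definition Pdual (R : realType) (G : zmodType) :=
  { chi : G -> circle R | forall a b, chi (a + b) = chi a + chi b }.

(* Main.v *)
Require Import Defs.
From HB Require Import structures.
From mathcomp Require Import all_boot all_algebra generic_quotient.
From mathcomp Require Import boolp reals ring.
Import GRing.Theory Num.Theory.
Local Open Scope ring_scope.
Local Open Scope quotient_scope.
Set Implicit Arguments. Unset Strict Implicit. Unset Printing Implicit Defensive.

Section Gen.
Variables (V W : zmodType) (f : V -> W).
Hypothesis fA : forall a b, f (a + b) = f a + f b.

Lemma fA0 : f 0 = 0.
Proof. by apply/(addrI (f 0)); rewrite -fA !addr0. Qed.
Lemma fAN a : f (- a) = - f a.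
Proof. by apply/(addrI (f a)); rewrite -fA !subrr fA0. Qed.
Lemma fAB a b : f (a - b) = f a - f b.
Proof. by rewrite fA fAN. Qed.
Lemma fAsum (I : Type) (r : seq I) (P : pred I) (F : I -> V) :
  f (\sum_(i <- r | P i) F i) = \sum_(i <- r | P i) f (F i).
Proof. by elim/big_rec2: _ => [|i x y _ <-]; rewrite ?fA0 ?fA. Qed.
Lemma fAMn a n : f (a *+ n) = f a *+ n.
Proof. by elim: n => [|n IH]; rewrite ?mulr0n ?fA0 // !mulrS fA IH. Qed.
Lemma fAMz a (n : int) : f (a *~ n) = f a *~ n.
Proof.
case: n => n; first by rewrite -!pmulrn fAMn.
by rewrite !NegzE !mulrNz fAN -!pmulrn fAMn.
Qed.
End Gen.

Lemma qeqP (V : zmodType) (S : subgrp V) (a b : V) :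
  \pi_(quotZ S) a = \pi_(quotZ S) b <-> S (a - b).
Proof.
split => [/(@eqmodP _ (qequiv S)) /asboolP //|H].
by apply/(@eqmodP _ (qequiv S)); apply/asboolP.
Qed.

Lemma repr_S (V : zmodType) (S : subgrp V) (a : V) :
  S (repr (\pi_(quotZ S) a) - a).
Proof. by apply/qeqP; rewrite reprK. Qed.

Lemma lift_eq (V W : zmodType) (S : subgrp V) (g : V -> W) :
  (forall a b, g (a + b) = g a + g b) -> (forall s, S s -> g s = 0) ->
  forall v, g (repr (\pi_(quotZ S) v)) = g v.
Proof.
move=> gA g0 v; have := repr_S S v; move: (repr _) => r /g0 H.
by rewrite -[r](subrK v) gA H add0r.
Qed.

Lemma lift_add (V W : zmodType) (S : subgrp V) (g : V -> W) :
  (forall a b, g (a + b) = g a + g b) -> (forall s, S s -> g s = 0) ->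
  forall a b : quotZ S, g (repr (a + b)) = g (repr a) + g (repr b).
Proof.
move=> gA g0 a b; by rewrite -[a]reprK -[b]reprK -piD !lift_eq.
Qed.

Section Main.
Variables (R : realType) (p l : nat) (lam : 'I_l -> nat) (alpha : 'M[int]_l).
Hypothesis hp : (0 < p)%N.

Definition pic (r : R) : circle R := \pi_(circle R) r.

Lemma picD a b : pic (a + b) = pic a + pic b.
Proof. exact: piD. Qed.
Lemma pic_eq a b : pic a = pic b <-> intZ_pred (a - b).
Proof. exact: qeqP. Qed.
Lemma pic_int n : pic n%:~R = 0.
Proof. by apply/pic_eq; exists n; rewrite subr0. Qed.
Lemma pic_mulz r n : pic (r *~ n) = pic r *~ n.
Proof. by apply: fAMz => a b; apply: picD. Qed.
Lemma pic_sum (I : Type) (r : seq I) (P : pred I) (F : I -> R) :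
  pic (\sum_(i <- r | P i) F i) = \sum_(i <- r | P i) pic (F i).
Proof. by apply: fAsum => a b; apply: picD. Qed.
Lemma intZ_floor (x : R) : intZ_pred x -> (Num.floor x)%:~R = x.
Proof. by move=> [n ->]; rewrite intrKfloor. Qed.
Lemma int_vec (F : 'I_l -> R) : (forall i, intZ_pred (F i)) ->
  exists k : 'rV[int]_l, forall i, (k 0 i)%:~R = F i.
Proof. by move=> H; exists (\row_i Num.floor (F i)) => i; rewrite mxE intZ_floor. Qed.

Local Notation Zp := (Zplam p lam).
Local Notation LA := (L p lam alpha).
Local Notation LB := (L p lam alpha^T).
Local Notation tZ := (toZplam p lam).
Local Notation e_ i := (delta_mx 0 i : 'rV[int]_l).

Definition P i : R := (p ^ lam i)%:R.
Lemma P_neq0 i : P i != 0.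
Proof. by rewrite pnatr_eq0 -lt0n expn_gt0 hp. Qed.

Lemma tZD a b : tZ (a + b) = tZ a + tZ b.
Proof. exact: piD. Qed.
Lemma tZ_plam k : tZ (plam p lam k) = 0.
Proof.
rewrite -(fA0 tZD) /toZplam; apply/qeqP.
by exists k; rewrite subr0.
Qed.

Lemma pairD (A B : zmodType) (a b : A) (c d : B) : (a + b, c + d) = (a, c) + (b, d).
Proof. by []. Qed.
Lemma LApiD (u v : Zp * 'rV[int]_l) : \pi_LA (u + v) = \pi_LA u + \pi_LA v.
Proof. exact: piD. Qed.
Lemma LBpiD (u v : Zp * 'rV[int]_l) : \pi_LB (u + v) = \pi_LB u + \pi_LB v.
Proof. exact: piD. Qed.

Lemma chiA (chi : Pdual R LA) a b : sval chi (a + b) = sval chi a + sval chi b.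
Proof. exact: (proj2_sig chi). Qed.

Lemma gA (chi : Pdual R LA) a b :
  sval chi (\pi_LA (tZ (a + b), 0)) =
  sval chi (\pi_LA (tZ a, 0)) + sval chi (\pi_LA (tZ b, 0)).
Proof.
by rewrite -chiA -LApiD tZD -pairD addr0.
Qed.

Lemma hA (chi : Pdual R LA) a b :
  sval chi (\pi_LA (0, a + b)) =
  sval chi (\pi_LA (0, a)) + sval chi (\pi_LA (0, b)).
Proof.
by rewrite -chiA -LApiD -pairD addr0.
Qed.

Lemma scale_e (c : 'rV[int]_l) i : c 0 i *: e_ i = e_ i *~ c 0 i.
Proof. by rewrite -scaler_int intz. Qed.

Lemma chiF (chi : Pdual R LA) c :
  sval chi (\pi_LA (tZ c, 0)) = \sum_i sval chi (\pi_LA (tZ (e_ i), 0)) *~ c 0 i.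
Proof.
rewrite {1}(row_sum_delta c) (fAsum (gA chi)).
by apply: eq_bigr => i _; rewrite scale_e (fAMz (gA chi)).
Qed.

Lemma chiY (chi : Pdual R LA) y :
  sval chi (\pi_LA (0, y)) = \sum_j sval chi (\pi_LA (0, e_ j)) *~ y 0 j.
Proof.
rewrite {1}(row_sum_delta y) (fAsum (hA chi)).
by apply: eq_bigr => i _; rewrite scale_e (fAMz (hA chi)).
Qed.

Lemma chi_formula (chi : Pdual R LA) c y :
  sval chi (\pi_LA (tZ c, y)) =
  \sum_i sval chi (\pi_LA (tZ (e_ i), 0)) *~ c 0 i +
  \sum_j sval chi (\pi_LA (0, e_ j)) *~ y 0 j.
Proof.
by rewrite -chiF -chiY -chiA -LApiD -pairD addr0 add0r.
Qed.

Lemma plam_e i : plam p lam (e_ i) = e_ i *+ (p ^ lam i).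
Proof.
apply/rowP => k; rewrite !mxE mulmxnE !mxE eqxx /=.
case: eqP => [->|_]; last by rewrite mulr0 mul0rn.
by rewrite mulr1 mulr1n natz.
Qed.

Lemma chi0 (chi : Pdual R LA) : sval chi 0 = 0.
Proof. exact: (fA0 (chiA chi)). Qed.

Lemma int1 (chi : Pdual R LA) (mu' : R) i :
  pic mu' = sval chi (\pi_LA (tZ (e_ i), 0)) -> intZ_pred (P i * mu').
Proof.
move=> H; have : pic (P i * mu') = pic 0.
  rewrite /P mulr_natl (fAMn picD) H -(fAMn (gA chi)) -plam_e tZ_plam.
  by rewrite (fA0 (@LApiD)) chi0 (fA0 picD).
by move/pic_eq; rewrite subr0.
Qed.

Lemma rel_e j : \pi_LA (tZ (row j alpha), 0) = \pi_LA (0, plam p lam (e_ j)).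
Proof.
apply/qeqP; exists (e_ j); rewrite /a_ -rowE.
by rewrite -[_ - _]/(_ - _, _ - _) subr0 sub0r.
Qed.

Lemma int2 (chi : Pdual R LA) (mu' tau' : 'I_l -> R) j :
  (forall i, pic (mu' i) = sval chi (\pi_LA (tZ (e_ i), 0))) ->
  pic (tau' j) = sval chi (\pi_LA (0, e_ j)) ->
  intZ_pred (P j * tau' j - \sum_i (alpha j i)%:~R * mu' i).
Proof.
move=> Hm Ht; suff : pic (P j * tau' j - \sum_i (alpha j i)%:~R * mu' i) = pic 0.
  by move/pic_eq; rewrite subr0.
rewrite (fAB picD) pic_sum /P mulr_natl (fAMn picD) Ht -(fAMn (hA chi)) -plam_e.
rewrite -rel_e chiF (fA0 picD); apply/eqP; rewrite subr_eq0; apply/eqP.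
by apply: eq_bigr => i _; rewrite mulrzl pic_mulz Hm mxE.
Qed.

Definition muc (chi : Pdual R LA) i : R := repr (sval chi (\pi_LA (tZ (e_ i), 0))).
Definition tauc (chi : Pdual R LA) j : R := repr (sval chi (\pi_LA (0, e_ j))).
Lemma pic_muc chi i : pic (muc chi i) = sval chi (\pi_LA (tZ (e_ i), 0)).
Proof. exact: reprK. Qed.
Lemma pic_tauc chi j : pic (tauc chi j) = sval chi (\pi_LA (0, e_ j)).
Proof. exact: reprK. Qed.

Definition Mc chi : 'rV[int]_l := \row_i Num.floor (P i * muc chi i).
Definition Dc chi : 'rV[int]_l :=
  \row_j Num.floor (P j * tauc chi j - \sum_i (alpha j i)%:~R * muc chi i).
Lemma McE chi i : (Mc chi 0 i)%:~R = P i * muc chi i.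
Proof. by rewrite mxE intZ_floor //; apply: int1; apply: pic_muc. Qed.
Lemma DcE chi j :
  (Dc chi 0 j)%:~R = P j * tauc chi j - \sum_i (alpha j i)%:~R * muc chi i.
Proof.
by rewrite mxE intZ_floor //; apply: int2 => [i|]; [apply: pic_muc|apply: pic_tauc].
Qed.

Definition Phi chi : LB := \pi_LB (tZ (Dc chi), Mc chi).

Lemma PhiE chi (mu' tau' : 'I_l -> R) (m d : 'rV[int]_l) :
  (forall i, pic (mu' i) = sval chi (\pi_LA (tZ (e_ i), 0))) ->
  (forall j, pic (tau' j) = sval chi (\pi_LA (0, e_ j))) ->
  (forall i, (m 0 i)%:~R = P i * mu' i) ->
  (forall j, (d 0 j)%:~R = P j * tau' j - \sum_i (alpha j i)%:~R * mu' i) ->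
  Phi chi = \pi_LB (tZ d, m).
Proof.
move=> Hmu Htau Hm Hd.
have [k Hk] : exists k : 'rV[int]_l, forall i, (k 0 i)%:~R = muc chi i - mu' i.
  by apply: int_vec => i; apply/pic_eq; rewrite pic_muc Hmu.
have [h Hh] : exists k : 'rV[int]_l, forall i, (k 0 i)%:~R = tauc chi i - tau' i.
  by apply: int_vec => i; apply/pic_eq; rewrite pic_tauc Htau.
apply/qeqP; exists (- k); rewrite /a_.
rewrite -[_ - _]/(_ - _, _ - _); congr (_, _).
  rewrite -(fAB tZD); apply/qeqP; exists h; apply/rowP => j.
  have HD := DcE chi j; rewrite /Dc mxE in HD.
  apply: (@intr_inj R); rewrite !mxE !intrB intrM HD Hd (fAsum (@intrD R)).
  have -> : \sum_i (((- k) 0 i * alpha^T i j)%:~R : R) =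
     - (\sum_i (alpha j i)%:~R * muc chi i - \sum_i (alpha j i)%:~R * mu' i).
    rewrite -sumrB -sumrN; apply: eq_bigr => i _.
    by rewrite !mxE intrM intrN Hk; ring.
  rewrite Hh -pmulrn /P; ring.
apply/rowP => i; have HM := McE chi i; rewrite /Mc mxE in HM; rewrite /=.
apply: (@intr_inj R); rewrite !mxE !intrB intrN intrM HM Hm.
rewrite ?mxE intrN Hk -pmulrn /P; ring.
Qed.

Lemma qLE (beta : 'M[int]_l) (c : Zp) (y : 'rV[int]_l) :
  qL R (\pi_(L p lam beta) (c, y)) = \row_k pic ((y 0 k)%:~R / P k).
Proof.
apply/rowP => k; rewrite !mxE.
have [x Hx] := repr_S (Lrel p lam beta) (c, y).
have H2 := congr1 snd Hx; move: H2 => /=.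
move: (repr _) => r H2; apply/qeqP; exists (- x 0 k).
have -> : r.2 = y - plam p lam x by rewrite -H2 addrC subrK.
rewrite !mxE intrB intrM -pmulrn intrN /P; field.
by rewrite -/(P k) P_neq0.
Qed.

Lemma cond3 x chi : (forall v, sval chi v = pairing (qL R v) x) ->
  Phi chi = fL alpha^T x.
Proof.
move=> H; set x' := repr x.
rewrite (@PhiE chi (fun _ => 0) (fun j => (x' 0 j)%:~R / P j) 0 x').
- by rewrite /fL /toZplam reprK.
- move=> i; rewrite H qLE /pairing big1 ?(fA0 picD) // => k _.
  by rewrite mxE mxE mul0r (fA0 picD) mul0rz.
- move=> j; rewrite H qLE /pairing (bigD1 j) //= big1 ?addr0.
    rewrite !mxE; have -> : (j == j) = true by apply/eqP.
    by rewrite mulr1n mul1r -pic_mulz -[in RHS]mulrzr mulrC.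
  move=> k kj; rewrite !mxE; case: (k =P j) => [E|_].
    by move: kj; rewrite E eqxx.
  by rewrite andbF mulr0n mul0r (fA0 picD) mul0rz.
- by move=> i; rewrite mxE mulr0.
- move=> j; rewrite big1 ?subr0; last by move=> i _; rewrite mulr0.
  by rewrite mulrC divfK ?P_neq0.
Qed.

Lemma cond4 chi c : pairing (qL R (Phi chi)) c = sval chi (fL alpha c).
Proof.
rewrite /Phi qLE /pairing.
under eq_bigr => i _ do rewrite mxE McE mulrC mulKf ?P_neq0 // pic_muc.
by rewrite -chiF /fL /toZplam reprK.
Qed.

Lemma cond2 chi1 chi2 chi3 : (forall a, sval chi3 a = sval chi1 a + sval chi2 a) ->
  Phi chi3 = Phi chi1 + Phi chi2.
Proof.
move=> H.
rewrite (@PhiE chi3 (fun i => muc chi1 i + muc chi2 i)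
   (fun j => tauc chi1 j + tauc chi2 j) (Mc chi1 + Mc chi2) (Dc chi1 + Dc chi2)).
- by rewrite tZD pairD LBpiD.
- by move=> i; rewrite picD !pic_muc H.
- by move=> j; rewrite picD !pic_tauc H.
- by move=> i; rewrite mxE intrD !McE mulrDr.
- move=> j; rewrite mxE intrD !DcE.
  have -> : \sum_i (alpha j i)%:~R * (muc chi1 i + muc chi2 i) =
    \sum_i (alpha j i)%:~R * muc chi1 i + \sum_i (alpha j i)%:~R * muc chi2 i.
    by rewrite -big_split; apply: eq_bigr => i _; rewrite mulrDr.
  ring.
Qed.

Definition mu (m : 'rV[int]_l) i : R := (m 0 i)%:~R / P i.
Definition Ssum (m : 'rV[int]_l) j : R := \sum_i (alpha j i)%:~R * mu m i.
Definition tau (d m : 'rV[int]_l) j : R := ((d 0 j)%:~R + Ssum m j) / P j.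
Definition Bc (m c : 'rV[int]_l) : R := \sum_i (c 0 i)%:~R * mu m i.
Definition By (d m y : 'rV[int]_l) : R := \sum_j (y 0 j)%:~R * tau d m j.

Lemma BcD m a b : Bc m (a + b) = Bc m a + Bc m b.
Proof. by rewrite -big_split; apply: eq_bigr => i _; rewrite mxE intrD mulrDl. Qed.
Lemma ByD d m a b : By d m (a + b) = By d m a + By d m b.
Proof. by rewrite -big_split; apply: eq_bigr => i _; rewrite mxE intrD mulrDl. Qed.

Lemma Bc_plam m k : Bc m (plam p lam k) = (\sum_i k 0 i * m 0 i)%:~R.
Proof.
rewrite (fAsum (@intrD R)); apply: eq_bigr => i _.
rewrite mxE !intrM -pmulrn /mu /P; field.
by rewrite -/(P i) P_neq0.
Qed.

Lemma B_rel d m x :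
  Bc m (x *m alpha) + By d m (- plam p lam x) = - (\sum_j x 0 j * d 0 j)%:~R.
Proof.
have -> : Bc m (x *m alpha) = \sum_j (x 0 j)%:~R * Ssum m j.
  rewrite /Bc /Ssum.
  under eq_bigr => i _ do rewrite mxE (fAsum (@intrD R)) mulr_suml.
  rewrite exchange_big /=; apply: eq_bigr => j _; rewrite mulr_sumr.
  by apply: eq_bigr => i _; rewrite intrM mulrA.
rewrite (fAsum (@intrD R)) -sumrN /By -big_split; apply: eq_bigr => j _ /=.
rewrite !mxE intrN intrM -pmulrn /tau intrM /P; field.
by rewrite -/(P j) P_neq0.
Qed.

Definition Hc (m : 'rV[int]_l) (c : Zp) : circle R := pic (Bc m (repr c)).
Lemma Hc_tZ m c : Hc m (tZ c) = pic (Bc m c).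
Proof.
rewrite /Hc /toZplam (@lift_eq _ _ (plamZ p lam) (fun c => pic (Bc m c))) //.
  by move=> a b; rewrite BcD picD.
by move=> s [k ->]; rewrite Bc_plam pic_int.
Qed.
Lemma HcA m a b : Hc m (a + b) = Hc m a + Hc m b.
Proof.
rewrite /Hc (@lift_add _ _ (plamZ p lam) (fun c => pic (Bc m c))) //.
  by move=> a' b'; rewrite BcD picD.
by move=> s [k ->]; rewrite Bc_plam pic_int.
Qed.

Definition G (d m : 'rV[int]_l) (u : Zp * 'rV[int]_l) : circle R :=
  Hc m u.1 + pic (By d m u.2).
Lemma GA d m a b : G d m (a + b) = G d m a + G d m b.
Proof. by rewrite /G /= HcA ByD picD addrACA. Qed.
Lemma G0 d m s : Lrel p lam alpha s -> G d m s = 0.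
Proof.
move=> [x ->]; rewrite /G /= /a_ Hc_tZ -picD B_rel -intrN.
exact: pic_int.
Qed.

Definition Psi0 (d m : 'rV[int]_l) (v : LA) : circle R := G d m (repr v).
Lemma Psi0A d m a b : Psi0 d m (a + b) = Psi0 d m a + Psi0 d m b.
Proof. exact: (@lift_add _ _ (Lrel p lam alpha) (G d m) (GA d m) (@G0 d m)). Qed.
Lemma Psi0E d m c y : Psi0 d m (\pi_LA (tZ c, y)) = pic (Bc m c + By d m y).
Proof.
rewrite /Psi0 (@lift_eq _ _ (Lrel p lam alpha) (G d m) (GA d m) (@G0 d m)).
by rewrite /G /= Hc_tZ picD.
Qed.

Lemma mu_shift m z i : mu (m - plam p lam z) i = mu m i - (z 0 i)%:~R.
Proof.
rewrite /mu !mxE intrB intrM -pmulrn /P; field.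
by rewrite -/(P i) P_neq0.
Qed.

Lemma Ssum_shift m z j :
  Ssum (m - plam p lam z) j = Ssum m j - ((z *m alpha^T) 0 j)%:~R.
Proof.
rewrite /Ssum; under eq_bigr => i _ do rewrite mu_shift mulrBr.
rewrite sumrB mxE (fAsum (@intrD R)); congr (_ - _).
by apply: eq_bigr => i _; rewrite mxE intrM mulrC.
Qed.

Lemma tau_shift d m z k j :
  tau (d + z *m alpha^T + plam p lam k) (m - plam p lam z) j = tau d m j + (k 0 j)%:~R.
Proof.
rewrite /tau Ssum_shift !mxE !intrD intrM -pmulrn /P.
field.
by rewrite -/(P j) P_neq0.
Qed.

Lemma Bc_shift m z c :
  Bc (m - plam p lam z) c = Bc m c - (\sum_i c 0 i * z 0 i)%:~R.
Proof.
rewrite /Bc; under eq_bigr => i _ do rewrite mu_shift mulrBr.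
rewrite sumrB (fAsum (@intrD R)); congr (_ - _).
by apply: eq_bigr => i _; rewrite intrM.
Qed.

Lemma By_shift d m z k y :
  By (d + z *m alpha^T + plam p lam k) (m - plam p lam z) y =
  By d m y + (\sum_j y 0 j * k 0 j)%:~R.
Proof.
rewrite /By; under eq_bigr => i _ do rewrite tau_shift mulrDr.
rewrite big_split (fAsum (@intrD R)); congr (_ + _).
by apply: eq_bigr => i _; rewrite intrM.
Qed.

Lemma B_inv d m d' m' c y : \pi_LB (tZ d, m) = \pi_LB (tZ d', m') ->
  pic (Bc m c + By d m y) = pic (Bc m' c + By d' m' y).
Proof.
move=> /qeqP [z]; rewrite -[_ - _]/(_ - _, _ - _) /a_ => -[H1 H2].
have [k Hk] : exists k, d - d' - z *m alpha^T = plam p lam k.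
  have : tZ (d - d' - z *m alpha^T) = tZ 0.
    by rewrite !(fAB tZD) H1 subrr (fA0 tZD).
  by rewrite /toZplam => /qeqP [k]; rewrite subr0 => ->; exists k.
have Em : m = m' - plam p lam z by rewrite -H2 addrC subrK.
have Ed : d = d' + z *m alpha^T + plam p lam k.
  by rewrite -Hk; apply/rowP => i; rewrite !mxE; ring.
rewrite Em Ed Bc_shift By_shift; apply/pic_eq.
exists (- (\sum_i c 0 i * z 0 i) + \sum_j y 0 j * k 0 j).
rewrite intrD intrN; ring.
Qed.
Lemma Pdual_eq (chi1 chi2 : Pdual R LA) :
  (forall v, sval chi1 v = sval chi2 v) -> chi1 = chi2.
Proof.
case: chi1 chi2 => [f1 h1] [f2 h2] /= H.
have E : f1 = f2 by apply: funext.
subst f2; congr exist; exact: Prop_irrelevance.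
Qed.

Definition Psi (w : LB) : Pdual R LA :=
  exist _ (Psi0 (repr (repr w).1) (repr w).2) (@Psi0A _ _).

Lemma rep_piB (w : LB) : w = \pi_LB (tZ (repr (repr w).1), (repr w).2).
Proof. by rewrite /toZplam reprK -surjective_pairing reprK. Qed.
Lemma rep_piA (w : LA) : w = \pi_LA (tZ (repr (repr w).1), (repr w).2).
Proof. by rewrite /toZplam reprK -surjective_pairing reprK. Qed.

Lemma PsiE w d m c y : w = \pi_LB (tZ d, m) ->
  sval (Psi w) (\pi_LA (tZ c, y)) = pic (Bc m c + By d m y).
Proof. by move=> hw; rewrite /Psi /= Psi0E; apply: B_inv; rewrite -hw -rep_piB. Qed.

Lemma sum_e (F : 'I_l -> R) i : \sum_k ((e_ i) 0 k)%:~R * F k = F i.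
Proof.
rewrite (bigD1 i) //= big1 ?addr0.
  rewrite !mxE; have -> : (i == i) = true by apply/eqP.
  by rewrite eqxx /= mulr1n mul1r.
move=> k ki; rewrite !mxE; case: (k =P i) => [E|_].
  by move: ki; rewrite E eqxx.
by rewrite andbF mul0r.
Qed.

Lemma sum_0 (F : 'I_l -> R) : \sum_k ((0 : 'rV[int]_l) 0 k)%:~R * F k = 0.
Proof. by rewrite big1 // => k _; rewrite mxE mul0r. Qed.

Lemma PhiPsi w : Phi (Psi w) = w.
Proof.
set d := repr (repr w).1; set m := (repr w).2; have hw := rep_piB w.
rewrite [RHS]hw; apply: (@PhiE _ (mu m) (tau d m)).
- by move=> i; rewrite (PsiE _ _ hw) /Bc /By sum_e sum_0 addr0.
- by move=> j; rewrite (PsiE _ _ hw) /Bc /By sum_e sum_0 add0r.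
- by move=> i; rewrite /mu mulrC divfK ?P_neq0.
- move=> j; rewrite /tau mulrC divfK ?P_neq0 // -/(Ssum m j); ring.
Qed.

Lemma mu_Mc chi i : mu (Mc chi) i = muc chi i.
Proof. by rewrite /mu McE mulrC mulKf ?P_neq0. Qed.
Lemma tau_Dc chi j : tau (Dc chi) (Mc chi) j = tauc chi j.
Proof.
rewrite /tau /Ssum; under eq_bigr => i _ do rewrite mu_Mc.
by rewrite DcE subrK mulrC mulKf ?P_neq0.
Qed.

Lemma PsiPhi chi : Psi (Phi chi) = chi.
Proof.
apply: Pdual_eq => v; rewrite [v]rep_piA.
rewrite (@PsiE _ (Dc chi) (Mc chi)) // chi_formula picD /Bc /By !pic_sum.
congr (_ + _); apply: eq_bigr => i _.
  by rewrite mu_Mc mulrzl pic_mulz pic_muc.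
by rewrite tau_Dc mulrzl pic_mulz pic_tauc.
Qed.

End Main.

Theorem theorem10p3 (R : realType) (p l : nat) (lam : 'I_l -> nat)
    (alpha : 'M[int]_l) :
  prime p ->
  (forall i, (0 < lam i)%N) ->
  (forall i j : 'I_l, (i <= j)%N -> (lam j <= lam i)%N) ->
  exists Phi : Pdual R (L p lam alpha) -> L p lam alpha^T,
    [/\ bijective Phi,
        (forall chi1 chi2 chi3 : Pdual R (L p lam alpha),
            (forall a, sval chi3 a = sval chi1 a + sval chi2 a) ->
            Phi chi3 = Phi chi1 + Phi chi2),
        (forall (x : Zplam p lam) (chi : Pdual R (L p lam alpha)),
            (forall v, sval chi v = pairing (qL R v) x) ->
            Phi chi = fL alpha^T x)
      & (forall (chi : Pdual R (L p lam alpha)) (c : Zplam p lam),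
            pairing (qL R (Phi chi)) c = sval chi (fL alpha c))].
Proof.
move=> pp _ _; have hp := prime_gt0 pp.
exists (@Phi R p l lam alpha); split.
- exists (@Psi R p l lam alpha hp) => [chi|w]; [exact: PsiPhi | exact: PhiPsi].
- exact: cond2.
- exact: cond3.
- exact: cond4.
Qed.
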